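(* Let $p$ and $q$ be integers such that $p\le -2$, $q\ge 4$ and $q>|p|+1$. Then $$\begin{aligned}\sum_{k = 1}^\infty \Big(\frac{-27F_p F_{p + q}}{F_q^2} \Big)^{k}\frac{F_{(2p + q)k}}{k^2 \binom{3k}{k}} &= \frac{6}{\sqrt 5} \Bigg( \arctan ^2 \bigg( \frac{\sqrt 3\,\sqrt[3]{F_{p + q}} }{2\sqrt[3]{\alpha^q F_p} + \sqrt[3]{F_{p + q}} } \bigg) - \arctan ^2 \bigg( \frac{\sqrt 3 \sqrt[3]{F_p}}{2\sqrt[3]{\alpha^qF_{p + q}} +(-1)^q \sqrt[3]{F_p} } \bigg) \Bigg)\\ &\quad - \frac{\sqrt 5}{10}\Bigg( \log ^2 \bigg( \frac{(-1)^pF_q}{ \big(\sqrt[3]{\alpha^pF_{p+q}} - \sqrt[3]{\alpha^{p+q}F_{p}} \big)^3 }\bigg) - \log^2 \bigg( \frac{\alpha ^{p + q} F_q }{\big(\sqrt[3]{\alpha ^q F_{p + q}} -(-1)^q \sqrt[3]{F_p}\big)^3 } \bigg ) \Bigg),\end{aligned}$$ and $$\begin{aligned}\sum_{k = 1}^\infty \Big(\frac{- 27F_pF_{p + q}}{F_q^2} \Big)^k \frac{L_{(2p + q)k}}{k^2\binom{3k}{k}} &= 6\Bigg( \arctan ^2 \bigg( \frac{\sqrt 3\,\sqrt[3]{F_{p + q}}}{2\sqrt[3]{\alpha^q F_p} + \sqrt[3]{F_{p + q}} } \bigg) + \arctan ^2 \bigg( \frac{\sqrt 3 \sqrt[3]{F_p}}{2\sqrt[3]{\alpha^qF_{p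 + q}} +(-1)^q \sqrt[3]{F_p} } \bigg) \Bigg)\\ &\quad - \frac{1}{2}\Bigg( \log ^2 \bigg( \frac{(-1)^p F_q}{\big(\sqrt[3]{\alpha^pF_{p+q}} - \sqrt[3]{\alpha^{p+q}F_{p}} \big)^3 }\bigg) + \log^2 \bigg( \frac{\alpha ^{p + q} F_q }{\big(\sqrt[3]{\alpha ^q F_{p + q}} -(-1)^q \sqrt[3]{F_p}\big)^3 } \bigg ) \Bigg).\end{aligned}$$
   Context: $F_n$ and $L_n$ are the Fibonacci and Lucas numbers, defined by $F_0=0$, $F_1=1$, $L_0=2$, $L_1=1$, $X_n=X_{n-1}+X_{n-2}$, and extended to negative indices by $F_{-j}=(-1)^{j-1}F_j$, $L_{-j}=(-1)^jL_j$. $\alpha=(1+\sqrt5)/2$. $\sqrt[3]{t}$ denotes the real cube root (negative for $t<0$). *)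

(* Defs.v *)
From Stdlib Require Import Reals ZArith.
From Stdlib Require Binomial.
From Coquelicot Require Import Coquelicot.
Open Scope R_scope.

Fixpoint fib_pair (n : nat) : R * R :=
  match n with
  | O => (0, 1)
  | S m => let '(a, b) := fib_pair m in (b, a + b)
  end.
Definition fibn (n : nat) : R := fst (fib_pair n).

Fixpoint luc_pair (n : nat) : R * R :=
  match n with
  | O => (2, 1)
  | S m => let '(a, b) := luc_pair m in (b, a + b)
  end.
Definition lucn (n : nat) : R := fst (luc_pair n).

Definition Fib (z : Z) : R :=
  if (0 <=? z)%Z then fibn (Z.to_nat z)
  else (-1) ^ (Z.to_nat (- z) - 1) * fibn (Z.to_nat (- z)).
Definition Luc (z : Z) : R :=
  if (0 <=? z)%Z then lucn (Z.to_nat z)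
  else (-1) ^ (Z.to_nat (- z)) * lucn (Z.to_nat (- z)).

Definition alpha : R := (1 + sqrt 5) / 2.

Definition cbrt (t : R) : R :=
  match Rlt_dec 0 t with
  | left _ => Rpower t (1/3)
  | right _ => match Rlt_dec t 0 with
               | left _ => - Rpower (- t) (1/3)
               | right _ => 0
               end
  end.

Definition binom (n k : nat) : R := Binomial.C n k.

Definition ratio (p q : Z) : R := -27 * Fib p * Fib (p + q) / (Fib q) ^ 2.

Definition theta1 (p q : Z) : R :=
  atan (sqrt 3 * cbrt (Fib (p + q)) /
        (2 * cbrt (powerRZ alpha q * Fib p) + cbrt (Fib (p + q)))).
Definition theta2 (p q : Z) : R :=
  atan (sqrt 3 * cbrt (Fib p) /
        (2 * cbrt (powerRZ alpha q * Fib (p + q)) + powerRZ (-1) q * cbrt (Fib p))).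
Definition lambda1 (p q : Z) : R :=
  ln (powerRZ (-1) p * Fib q /
      (cbrt (powerRZ alpha p * Fib (p + q)) - cbrt (powerRZ alpha (p + q) * Fib p)) ^ 3).
Definition lambda2 (p q : Z) : R :=
  ln (powerRZ alpha (p + q) * Fib q /
      (cbrt (powerRZ alpha q * Fib (p + q)) - powerRZ (-1) q * cbrt (Fib p)) ^ 3).

Definition term (X : Z -> R) (p q : Z) (k : nat) : R :=
  (ratio p q) ^ k * X ((2 * p + q) * Z.of_nat k)%Z
  / ((INR k) ^ 2 * binom (3 * k) k).

(* Main.v *)
Require Import Defs.
From Stdlib Require Import Reals ZArith Lra Lia.
From Coquelicot Require Import Coquelicot.
Open Scope R_scope.

Lemma contR (f : R -> R) x : ex_derive f x -> continuous f x.
Proof. intros H. apply (ex_derive_continuous (K:=R_AbsRing) (V:=R_NormedModule) f x H). Qed.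

Ltac simplR := repeat (change (minus ?a ?b) with (Rminus a b) || change (scal ?a ?b) with (Rmult a b) || change (plus ?a ?b) with (Rplus a b)).
Ltac toR := match goal with |- ?a = ?b => change (@eq R a b) end.
Lemma minusR (a b : R) : minus a b = a - b. Proof. reflexivity. Qed.
Lemma scalR (a b : R) : scal a b = a * b. Proof. reflexivity. Qed.
Lemma plusR (a b : R) : plus a b = a + b. Proof. reflexivity. Qed.

Lemma is_RInt_ext_val (f g : R -> R) (a b l l' : R) :
  (forall x, Rmin a b < x < Rmax a b -> f x = g x) -> l = l' ->
  is_RInt f a b l -> is_RInt g a b l'.
Proof. intros H1 H2 H3. subst l'. exact (is_RInt_ext f g a b l H1 H3). Qed.

Lemma Beta_int (m n : nat) :
  is_RInt (fun t => t ^ m * (1 - t) ^ n) 0 1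
    (INR (fact m) * INR (fact n) / INR (fact (m + n + 1))).
Proof.
  revert n; induction m as [|m IH]; intros n.
  - apply (is_RInt_ext (fun t => (1 - t) ^ n)).
    { intros x _; simpl; ring. }
    replace (INR (fact 0) * INR (fact n) / INR (fact (0 + n + 1)))
      with (minus ((fun t => - (1 - t) ^ (S n) / INR (S n)) 1)
                  ((fun t => - (1 - t) ^ (S n) / INR (S n)) 0)).
    + apply (is_RInt_derive (fun t => - (1 - t) ^ (S n) / INR (S n)) (fun t => (1 - t) ^ n)).
      * intros x _. assert (Hc: 0 < INR (S n)) by (apply lt_0_INR; lia).
        auto_derive; [lra|].
        replace (match n with 0%nat => 1 | S _ => INR n + 1 end) with (INR (S n)) by reflexivity.
        replace (1 + - x) with (1 - x) by ring. generalize ((1-x)^n); intros. field. lra.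
      * intros x _. apply contR; auto_derive; easy.
    + rewrite minusR.
      replace (0 + n + 1)%nat with (S n) by lia.
      change (fact (S n)) with (S n * fact n)%nat. rewrite mult_INR. simpl (fact 0).
      assert (0 < INR (fact n)) by apply (lt_0_INR _ (lt_O_fact n)).
      rewrite !S_INR. pose proof (pos_INR n).
      replace (1 - 1) with 0 by ring. rewrite pow_i; [|lia].
      replace (1 - 0) with 1 by ring. rewrite pow1. change (INR 0) with 0. toR. field. lra.
  - pose proof (IH (S n)) as H.
    set (g := fun t => - (1 - t) ^ (S n) / INR (S n)).
    set (f := fun t : R => t ^ (S m)).
    assert (H2 : is_RInt (fun t => scal (INR (S m) * t ^ m) (g t)) 0 1
                   (- INR (S m) / INR (S n) * (INR (fact m) * INR (fact (S n)) / INR (fact (m + S n + 1))))).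
    { apply (is_RInt_ext (fun t => (- INR (S m) / INR (S n)) * (t ^ m * (1 - t) ^ S n))).
      - intros x _. unfold g. change (scal ?a ?b) with (a * b). toR. field.
        rewrite S_INR. pose proof (pos_INR n). lra.
      - exact (is_RInt_scal _ _ _ _ _ H). }
    pose proof (is_RInt_scal_derive_r f g (fun t => INR (S m) * t ^ m) (fun t => (1 - t) ^ n) 0 1 (- INR (S m) / INR (S n) * (INR (fact m) * INR (fact (S n)) / INR (fact (m + S n + 1))))) as H3.
    eapply is_RInt_ext_val; [ | | apply H3; [ | | | | exact H2 ] ].
    + intros x _. unfold f. change (scal ?a ?b) with (a * b). toR. ring.
    + unfold f, g. simplR.
      replace (1 - 1) with 0 by ring. rewrite pow_i; [|lia].
      replace (m + S n + 1)%nat with (S m + n + 1)%nat by lia.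
      change (fact (S m)) with (S m * fact m)%nat.
      change (fact (S n)) with (S n * fact n)%nat.
      rewrite !mult_INR.
      rewrite !S_INR. pose proof (pos_INR n). pose proof (pos_INR m).
      assert (0 < INR (fact (S m + n + 1))) by apply (lt_0_INR _ (lt_O_fact _)).
      rewrite pow_i by lia. rewrite pow1. toR. field. lra.
    + intros x _. unfold f. auto_derive; [easy|].
      replace (match m with 0%nat => 1 | S _ => INR m + 1 end) with (INR (S m)) by reflexivity. toR. ring.
    + intros x _. unfold g. assert (Hc: 0 < INR (S n)) by (apply lt_0_INR; lia).
        auto_derive; [lra|].
        replace (match n with 0%nat => 1 | S _ => INR n + 1 end) with (INR (S n)) by reflexivity.
        replace (1 + - x) with (1 - x) by ring. generalize ((1-x)^n); intros. toR. field. lra.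
    + intros x _. apply contR; auto_derive; easy.
    + intros x _. apply contR; auto_derive; easy.
Qed.

Lemma ex_RInt_contR (f : R -> R) a b :
  (forall z, Rmin a b <= z <= Rmax a b -> continuous f z) -> ex_RInt f a b.
Proof. apply (ex_RInt_continuous (V:=R_CompleteNormedModule)). Qed.
Lemma RInt_correctR (f : R -> R) a b : ex_RInt f a b -> is_RInt f a b (RInt f a b).
Proof. apply (RInt_correct (V:=R_CompleteNormedModule)). Qed.
Lemma is_RInt_minusR (f g : R -> R) a b If Ig :
  is_RInt f a b If -> is_RInt g a b Ig -> is_RInt (fun y => f y - g y) a b (If - Ig).
Proof. apply (is_RInt_minus (V:=R_NormedModule)). Qed.
Lemma is_RInt_plusR (f g : R -> R) a b If Ig :
  is_RInt f a b If -> is_RInt g a b Ig -> is_RInt (fun y => f y + g y) a b (If + Ig).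
Proof. apply (is_RInt_plus (V:=R_NormedModule)). Qed.
Lemma is_RInt_scalR (f : R -> R) a b k If :
  is_RInt f a b If -> is_RInt (fun y => k * f y) a b (k * If).
Proof. apply (is_RInt_scal (V:=R_NormedModule)). Qed.
Lemma norm_RInt_le_constR (f : R -> R) a b lf M : a <= b ->
  (forall x, a <= x <= b -> Rabs (f x) <= M) -> is_RInt f a b lf -> Rabs lf <= (b - a) * M.
Proof. apply (norm_RInt_le_const (V:=R_NormedModule)). Qed.
Lemma is_RInt_deriveR (f df : R -> R) a b :
  (forall x, Rmin a b <= x <= Rmax a b -> is_derive f x (df x)) ->
  (forall x, Rmin a b <= x <= Rmax a b -> continuous df x) ->
  is_RInt df a b (f b - f a).
Proof. apply (is_RInt_derive (V:=R_CompleteNormedModule)). Qed.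

Definition ca (k : nat) : R := / (INR k ^ 2 * binom (3 * k) k).

Lemma fact_pos_R n : 0 < INR (fact n).
Proof. apply lt_0_INR, lt_O_fact. Qed.

Lemma PS_derive_ca (n : nat) :
  PS_derive ca n = INR (fact n) * INR (fact (2 * n + 2)) / INR (fact (n + (2 * n + 2) + 1)).
Proof.
  unfold PS_derive, ca, binom, Binomial.C.
  replace (3 * S n - S n)%nat with (2 * n + 2)%nat by lia.
  replace (n + (2 * n + 2) + 1)%nat with (3 * S n)%nat by lia.
  change (fact (S n)) with (S n * fact n)%nat. rewrite mult_INR.
  pose proof (fact_pos_R n). pose proof (fact_pos_R (2*n+2)). pose proof (fact_pos_R (3 * S n)).
  assert (0 < INR (S n)) by (apply lt_0_INR; lia).
  field. lra.
Qed.

Lemma b_int (n : nat) :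
  is_RInt (fun t => t ^ n * (1 - t) ^ (2 * n + 2)) 0 1 (PS_derive ca n).
Proof. rewrite PS_derive_ca. apply Beta_int. Qed.

Lemma tpoly_bound t : 0 <= t <= 1 -> 0 <= t * (1 - t) ^ 2 <= 4 / 27.
Proof. intros H. split. apply Rmult_le_pos; [lra|]. apply pow2_ge_0.
  assert (0 <= (1 - 3 * t) ^ 2 * (4 - 3 * t)) by (apply Rmult_le_pos; [apply pow2_ge_0|lra]).
  nra. Qed.

Lemma b_bound (n : nat) : 0 <= PS_derive ca n <= (4/27) ^ n.
Proof.
  split.
  - apply (is_RInt_ge_0 _ 0 1 _ Rle_0_1 (b_int n)).
    intros x Hx. apply Rmult_le_pos; apply pow_le; lra.
  - assert (H := is_RInt_const 0 1 ((4/27)^n)).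
    apply Rle_trans with (scal (1 - 0) ((4 / 27) ^ n)); [| change (scal ?a ?b) with (a*b); right; ring].
    refine (is_RInt_le _ _ 0 1 _ _ Rle_0_1 (b_int n) H _).
    intros x Hx.
    replace ((1 - x) ^ (2 * n + 2)) with (((1 - x)^2) ^ n * (1 - x)^2)
      by (rewrite <- pow_mult, <- pow_add; f_equal; lia).
    replace (x ^ n * (((1 - x) ^ 2) ^ n * (1 - x) ^ 2)) with ((x * (1 - x)^2) ^ n * (1 - x)^2)
      by (rewrite Rpow_mult_distr; ring).
    pose proof (tpoly_bound x ltac:(lra)) as [H1 H2].
    assert ((x * (1 - x) ^ 2) ^ n <= (4/27)^n) by (apply pow_incr; lra).
    assert (0 <= (1 - x)^2 <= 1) by (split; [apply pow2_ge_0| nra]).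
    assert (0 <= (x * (1 - x) ^ 2) ^ n) by (apply pow_le; lra).
    nra.
Qed.

Lemma ca_radius (x : R) : Rabs x < 27/4 -> Rbar_lt (Rabs x) (CV_radius ca).
Proof.
  intros Hx. rewrite <- CV_radius_derive.
  set (r := (Rabs x + 27/4) / 2).
  assert (Hr : Rbar_le r (CV_radius (PS_derive ca))).
  { destruct (CV_radius_bounded (PS_derive ca)) as [Hub _].
    apply Hub. exists 1. intros n.
    pose proof (b_bound n) as [H1 H2].
    assert (0 <= r) by (pose proof (Rabs_pos x); unfold r; lra).
    rewrite Rabs_mult, (Rabs_right (PS_derive ca n)) by lra.
    rewrite <- RPow_abs, (Rabs_right r) by lra.
    assert (r ^ n <= (27/4)^n) by (apply pow_incr; unfold r; pose proof (Rabs_pos x); lra).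
    assert (0 <= r ^ n) by (apply pow_le; lra).
    apply Rle_trans with ((4/27)^n * (27/4)^n).
    - apply Rmult_le_compat; lra.
    - rewrite <- Rpow_mult_distr. replace (4/27*(27/4)) with 1 by field. rewrite pow1. lra. }
  destruct (CV_radius (PS_derive ca)) as [c| |]; simpl in *; auto.
  unfold r in Hr. lra.
Qed.

Lemma geom_sum (c w : R) (N : nat) :
  sum_n (fun n => c * w ^ n) N * (1 - w) = c * (1 - w ^ S N).
Proof.
  induction N as [|N IH].
  - rewrite sum_O. simpl. ring.
  - rewrite sum_Sn. change (plus ?a ?b) with (a + b).
    rewrite Rmult_plus_distr_r, IH. simpl. ring.
Qed.

Lemma partial_int (x : R) (N : nat) :
  is_RInt (fun t => sum_n (fun n => (1 - t) ^ 2 * (x * t * (1 - t) ^ 2) ^ n) N) 0 1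
    (sum_n (fun n => PS_derive ca n * x ^ n) N).
Proof.
  assert (Ht : forall n, is_RInt (fun t => (1 - t) ^ 2 * (x * t * (1 - t) ^ 2) ^ n) 0 1
                    (PS_derive ca n * x ^ n)).
  { intros n.
    apply (is_RInt_ext_val (fun t => scal (x ^ n) (t ^ n * (1 - t) ^ (2 * n + 2))) _ 0 1
             (scal (x ^ n) (PS_derive ca n))).
    - intros t _. change (scal ?a ?b) with (a * b).
      rewrite !Rpow_mult_distr, <- pow_mult.
      replace (2 * n + 2)%nat with (2 + 2 * n)%nat by lia. rewrite pow_add. toR. ring.
    - change (scal ?a ?b) with (a * b). toR. ring.
    - exact (is_RInt_scal _ _ _ _ _ (b_int n)). }
  induction N as [|N IH].
  - apply (is_RInt_ext_val (fun t => (1 - t) ^ 2 * (x * t * (1 - t) ^ 2) ^ 0) _ 0 1 (PS_derive ca 0 * x ^ 0)).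
    + intros t _. rewrite sum_O. reflexivity.
    + rewrite sum_O. reflexivity.
    + apply Ht.
  - apply (is_RInt_ext_val (fun t => sum_n (fun n => (1 - t) ^ 2 * (x * t * (1 - t) ^ 2) ^ n) N +
                              (1 - t) ^ 2 * (x * t * (1 - t) ^ 2) ^ (S N)) _ 0 1
              (sum_n (fun n => PS_derive ca n * x ^ n) N + PS_derive ca (S N) * x ^ (S N))).
    + intros t _. rewrite sum_Sn. reflexivity.
    + rewrite sum_Sn. reflexivity.
    + exact (is_RInt_plus _ _ 0 1 _ _ IH (Ht (S N))).
Qed.

Definition gfun (x t : R) : R := (1 - t) ^ 2 / (1 - x * t * (1 - t) ^ 2).

Lemma Jser (x : R) : Rabs x < 27/4 ->
  is_series (fun n => PS_derive ca n * x ^ n) (RInt (gfun x) 0 1).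
Proof.
  intros Hx.
  set (rho := Rabs x * (4/27)).
  assert (Hrho : 0 <= rho < 1) by (pose proof (Rabs_pos x); unfold rho; lra).
  assert (Hw : forall t, 0 <= t <= 1 -> Rabs (x * t * (1 - t) ^ 2) <= rho).
  { intros t Ht. pose proof (tpoly_bound t Ht).
    rewrite Rmult_assoc, Rabs_mult, (Rabs_right (t * _)) by lra.
    unfold rho. apply Rmult_le_compat_l; [apply Rabs_pos| lra]. }
  assert (Hw1 : forall t, 0 <= t <= 1 -> 0 < 1 - x * t * (1 - t) ^ 2).
  { intros t Ht. specialize (Hw t Ht). apply Rabs_le_between in Hw. lra. }
  assert (Hex : ex_RInt (gfun x) 0 1).
  { apply ex_RInt_contR. intros z Hz.
    rewrite Rmin_left, Rmax_right in Hz by lra.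
    apply contR. unfold gfun. auto_derive. specialize (Hw1 z Hz). lra. }
  set (Sp := fun N => sum_n (fun n => PS_derive ca n * x ^ n) N).
  assert (Hb : forall N, Rabs (RInt (gfun x) 0 1 - Sp N) <= rho ^ S N / (1 - rho)).
  { intros N.
    pose proof (is_RInt_minusR _ _ 0 1 _ _ (RInt_correctR _ _ _ Hex) (partial_int x N)) as H.
    replace (rho ^ S N / (1 - rho)) with ((1 - 0) * (rho ^ S N / (1 - rho))) by ring.
    refine (norm_RInt_le_constR _ 0 1 _ _ Rle_0_1 _ H).
    intros t Ht. cbv beta.
    set (w := x * t * (1 - t) ^ 2).
    pose proof (geom_sum ((1 - t) ^ 2) w N) as G.
    specialize (Hw t Ht). specialize (Hw1 t Ht). fold w in Hw, Hw1.
    assert (E : gfun x t - sum_n (fun n => (1 - t) ^ 2 * w ^ n) N = (1 - t) ^ 2 * w ^ S N / (1 - w)).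
    { unfold gfun. fold w. apply (Rmult_eq_reg_r (1 - w)); [|lra].
      rewrite Rmult_minus_distr_r, G. field. lra. }
    rewrite E.
    rewrite Rabs_div by lra. rewrite Rabs_mult, <- !RPow_abs, pow2_abs.
    rewrite (Rabs_right (1 - w)) by lra.

    assert (0 <= (1 - t)^2 <= 1) by (split; [apply pow2_ge_0| nra]).
    assert (Rabs w ^ S N <= rho ^ S N) by (apply pow_incr; split; [apply Rabs_pos|exact Hw]).
    assert (0 <= Rabs w ^ S N) by (apply pow_le, Rabs_pos).
    unfold Rdiv. apply Rmult_le_compat.
    - apply Rmult_le_pos; lra.
    - apply Rlt_le, Rinv_0_lt_compat; lra.
    - nra.
    - apply Rinv_le_contravar; [lra|]. apply Rabs_le_between in Hw. lra. }
  change (is_lim_seq Sp (RInt (gfun x) 0 1)).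
  apply is_lim_seq_ext with (fun N => RInt (gfun x) 0 1 - (RInt (gfun x) 0 1 - Sp N)).
  { intros; ring. }
  replace (Finite (RInt (gfun x) 0 1)) with (Finite (RInt (gfun x) 0 1 - 0)) by (f_equal; ring).
  apply is_lim_seq_minus'. apply is_lim_seq_const.
  apply is_lim_seq_abs_0.
  apply is_lim_seq_le_le with (fun _ => 0) (fun N => rho ^ S N / (1 - rho)).
  - intros N. split; [apply Rabs_pos| apply Hb].
  - apply is_lim_seq_const.
  - replace (Finite 0) with (Rbar_mult (/ (1 - rho)) (Rbar_mult rho 0)) by (simpl; f_equal; ring).
    apply is_lim_seq_ext with (fun N => / (1 - rho) * (rho * rho ^ N)).
    { intros; simpl; field; lra. }
    apply is_lim_seq_scal_l. apply is_lim_seq_scal_l.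
    apply is_lim_seq_geom. rewrite Rabs_right; lra.
Qed.

Lemma sqrt3_sq : sqrt 3 * sqrt 3 = 3.
Proof. apply sqrt_sqrt. lra. Qed.
Lemma sqrt3_pos : 0 < sqrt 3.
Proof. apply sqrt_lt_R0. lra. Qed.

Lemma inv_sqrt3_sq K : / (sqrt 3 * K) * / (sqrt 3 * K) = / (3 * K ^ 2).
Proof. rewrite <- Rinv_mult. f_equal. replace (sqrt 3 * K * (sqrt 3 * K)) with ((sqrt 3 * sqrt 3) * K^2) by ring. rewrite sqrt3_sq. reflexivity. Qed.

Lemma inv_sqrt3_sq' K : / (sqrt 3 * K * (sqrt 3 * K)) = / (3 * K ^ 2).
Proof. rewrite Rinv_mult. apply inv_sqrt3_sq. Qed.

Lemma atan_sq1 a K : K <> 0 ->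
  1 + a * / (sqrt 3 * K) * (a * / (sqrt 3 * K) * 1) = (3 * K ^ 2 + a ^ 2) / (3 * K ^ 2).
Proof. intros HK.
  replace (1 + a * / (sqrt 3 * K) * (a * / (sqrt 3 * K) * 1)) with
    (1 + a * a * (/ (sqrt 3 * K) * / (sqrt 3 * K))) by ring.
  rewrite inv_sqrt3_sq. field. auto. Qed.

Lemma atan_sq2 a b : b <> 0 ->
  1 + sqrt 3 * a * / b * (sqrt 3 * a * / b * 1) = (b ^ 2 + 3 * a ^ 2) / (b ^ 2).
Proof. intros Hb.
  replace (1 + sqrt 3 * a * / b * (sqrt 3 * a * / b * 1)) with
    (1 + (sqrt 3 * sqrt 3) * a * a / b ^ 2) by (field; auto).
  rewrite sqrt3_sq. field. auto. Qed.

Definition xs (s : R) : R := -27 * s ^ 3 / (1 - s ^ 3) ^ 2.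
Definition LtS (s t : R) : R := (1 - s) ^ 2 + 3 * s * t.
Definition QtS (s t : R) : R := 9 * s ^ 2 * t ^ 2 - 3 * s * (1 + 4 * s + s ^ 2) * t + (1 + s + s ^ 2) ^ 2.
Definition c1 (s : R) : R := (1 - s ^ 3) ^ 2 * (1 + s + s ^ 2) / (81 * s ^ 3 * (1 - s + s ^ 2)).
Definition c2 (s : R) : R := (1 - s ^ 3) ^ 2 * (1 - s) ^ 2 / (81 * s ^ 3 * (1 - s + s ^ 2)).
Definition c3 (s : R) : R := - 2 * sqrt 3 * (1 - s) ^ 3 * (1 + s + s ^ 2) ^ 2 / (81 * s ^ 2 * (1 + s) * (1 - s + s ^ 2)).
Definition Phi (s t : R) : R :=
  c1 s * ln (LtS s t) + c2 s * ln (QtS s t)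
  + c3 s * atan ((6 * s * t - 1 - 4 * s - s ^ 2) / (sqrt 3 * (1 - s ^ 2))).

Lemma Lt_pos s t : -1 < s < 1 -> 0 <= t <= 1 -> 0 < LtS s t.
Proof. intros Hs Ht. unfold LtS.
  assert (0 < (1 - s) ^ 2) by (apply pow_lt; lra).
  assert (0 < 1 + s + s ^ 2) by nra.
  replace ((1 - s) ^ 2 + 3 * s * t) with ((1 - t) * (1 - s) ^ 2 + t * (1 + s + s ^ 2)) by ring.
  destruct (Req_dec t 0) as [->|]; [lra|]. 
  assert (0 <= (1 - t) * (1 - s) ^ 2) by (apply Rmult_le_pos; lra).
  assert (0 < t * (1 + s + s ^ 2)) by (apply Rmult_lt_0_compat; lra). lra. Qed.

Lemma Qt_eq s t : 4 * QtS s t = (6 * s * t - 1 - 4 * s - s ^ 2) ^ 2 + 3 * (1 - s ^ 2) ^ 2.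
Proof. unfold QtS. ring. Qed.

Lemma Qt_pos s t : -1 < s < 1 -> 0 < QtS s t.
Proof. intros Hs. pose proof (Qt_eq s t).
  assert (0 < (1 - s ^ 2) ^ 2) by (apply pow_lt; nra).
  assert (0 <= (6 * s * t - 1 - 4 * s - s ^ 2) ^ 2) by apply pow2_ge_0. lra. Qed.

Lemma den_eq s t : 1 - s ^ 3 <> 0 ->
  1 - xs s * t * (1 - t) ^ 2 = LtS s t * QtS s t / (1 - s ^ 3) ^ 2.
Proof. intros H. unfold xs, LtS, QtS. field. auto. Qed.

Lemma gfun_xs s t : -1 < s < 1 -> 0 <= t <= 1 ->
  gfun (xs s) t = (1 - t) ^ 2 * (1 - s ^ 3) ^ 2 / (LtS s t * QtS s t).
Proof. intros Hs Ht.
  assert (1 - s ^ 3 <> 0) by (assert (s^3 < 1) by nra; lra).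
  pose proof (Lt_pos s t Hs Ht). pose proof (Qt_pos s t Hs).
  unfold gfun. rewrite den_eq by auto. field. repeat split; lra. Qed.

Lemma Phi_deriv s t : -1 < s < 1 -> s <> 0 -> 0 <= t <= 1 ->
  is_derive (Phi s) t (gfun (xs s) t).
Proof.
  intros Hs Hs0 Ht.
  rewrite gfun_xs by auto.
  pose proof (Lt_pos s t Hs Ht). pose proof (Qt_pos s t Hs).
  assert (1 - s ^ 3 <> 0) by (assert (s^3 < 1) by nra; lra).
  assert (K : 1 - s * (s * 1) <> 0) by nra.
  assert (1 + s <> 0) by lra.
  assert (1 - s + s ^ 2 <> 0) by nra.
  pose proof sqrt3_pos.
  unfold Phi, LtS, QtS in *. auto_derive.
  { repeat split; lra. }
  rewrite atan_sq1 by exact K.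
  unfold c1, c2, c3.
  field. repeat split; try lra; nra.
Qed.

Lemma eq_by_deriv (f g df : R -> R) (a b x0 x : R) :
  a < x0 < b -> a < x < b ->
  (forall y, a < y < b -> is_derive f y (df y)) ->
  (forall y, a < y < b -> is_derive g y (df y)) ->
  f x0 = g x0 -> f x = g x.
Proof.
  intros H0 H1 Hf Hg E.
  set (h := fun y => f y - g y).
  assert (Hh : forall y, a < y < b -> is_derive h y 0).
  { intros y Hy. unfold h. replace 0 with (df y - df y) by ring.
    apply (is_derive_minus f g y (df y) (df y)); auto. }
  destruct (MVT_gen h x0 x (fun _ => 0)) as [c [Hc Hc2]].
  - intros y Hy. apply Hh.
    split; [apply Rlt_le_trans with (Rmin x0 x)|apply Rle_lt_trans with (Rmax x0 x)];
      try lra; [apply Rmin_glb_lt|apply Rmax_lub_lt]; lra.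
  - intros y Hy. apply continuity_pt_filterlim. apply contR.
    exists 0. apply Hh.
    assert (a < Rmin x0 x) by (apply Rmin_glb_lt; lra).
    assert (Rmax x0 x < b) by (apply Rmax_lub_lt; lra). lra.
  - unfold h in Hc2. lra.
Qed.

Lemma sqrt3_inv : / sqrt 3 = sqrt 3 / 3.
Proof. pose proof sqrt3_pos.
  apply (Rmult_eq_reg_l (sqrt 3)); [|lra]. rewrite Rinv_r by lra. unfold Rdiv.
  rewrite <- Rmult_assoc, sqrt3_sq. field. Qed.

Definition theta_s (s : R) : R := atan (sqrt 3 * s / (2 + s)).
Definition lam_s (s : R) : R := ln ((1 + s + s ^ 2) / (1 - s) ^ 2).

Lemma theta_deriv s : -1 < s < 1 ->
  is_derive theta_s s (3 * sqrt 3 / (6 * (1 + s + s ^ 2))).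
Proof. intros Hs. unfold theta_s. pose proof sqrt3_pos.
  assert (2 + s <> 0) by lra. assert (0 < 1 + s + s ^ 2) by nra.
  auto_derive. { lra. }
  rewrite atan_sq2 by lra. field. lra.
Qed.

Lemma AT_deriv s : -1 < s < 1 ->
  is_derive (fun s => atan ((1 + 4 * s + s ^ 2) / (sqrt 3 * (1 - s ^ 2))) - atan ((1 - s) / (sqrt 3 * (1 + s)))) s
    (3 * (3 * sqrt 3 / (6 * (1 + s + s ^ 2)))).
Proof. intros Hs. pose proof sqrt3_pos.
  assert (K1 : 1 - s * (s * 1) <> 0) by nra. assert (K2 : 1 + s <> 0) by lra.
  assert (0 < 1 + s + s ^ 2) by nra.
  auto_derive. { repeat split; nra. }
  rewrite (atan_sq1 _ _ K1), (atan_sq1 _ _ K2).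
  rewrite !inv_sqrt3_sq', !Rinv_mult, !sqrt3_inv. field. repeat split; try lra; nra.
Qed.

Lemma AT_id s : -1 < s < 1 ->
  atan ((1 + 4 * s + s ^ 2) / (sqrt 3 * (1 - s ^ 2))) - atan ((1 - s) / (sqrt 3 * (1 + s)))
  = 3 * theta_s s.
Proof.
  intros Hs.
  apply (eq_by_deriv (fun s => atan ((1 + 4 * s + s ^ 2) / (sqrt 3 * (1 - s ^ 2))) - atan ((1 - s) / (sqrt 3 * (1 + s))))
           (fun s => 3 * theta_s s) (fun s => 3 * (3 * sqrt 3 / (6 * (1 + s + s ^ 2)))) (-1) 1 0 s); auto.
  - lra.
  - apply AT_deriv.
  - intros y Hy. apply (is_derive_scal theta_s y 3 _ (theta_deriv y Hy)).
  - unfold theta_s. replace (sqrt 3 * 0 / (2 + 0)) with 0 by field. rewrite atan_0.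
    replace ((1 + 4 * 0 + 0 ^ 2) / (sqrt 3 * (1 - 0 ^ 2))) with ((1 - 0) / (sqrt 3 * (1 + 0))) by (field; pose proof sqrt3_pos; lra).
    ring.
Qed.

Definition Jh (s : R) : R :=
  - (1 - s) ^ 2 * (1 + s + s ^ 2) ^ 2 * (2 * sqrt 3 * (1 - s) * theta_s s - (1 + s) * lam_s s)
  / (27 * s ^ 2 * (1 + s) * (1 - s + s ^ 2)).

Lemma J_closed s : -1 < s < 1 -> s <> 0 -> RInt (gfun (xs s)) 0 1 = Jh s.
Proof.
  intros Hs Hs0.
  assert (H : is_RInt (gfun (xs s)) 0 1 (Phi s 1 - Phi s 0)).
  { apply is_RInt_deriveR.
    - intros t Ht. rewrite Rmin_left, Rmax_right in Ht by lra. apply Phi_deriv; auto.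
    - intros t Ht. rewrite Rmin_left, Rmax_right in Ht by lra. apply contR.
      assert (1 - s ^ 3 <> 0) by (assert (s^3 < 1) by nra; lra).
      pose proof (Lt_pos s t Hs Ht). pose proof (Qt_pos s t Hs).
      assert (0 < 1 - xs s * t * (1 - t) ^ 2).
      { rewrite den_eq by auto. apply Rdiv_lt_0_compat. nra. apply pow_lt. 
        assert (s^3 < 1) by nra; lra. }
      unfold gfun. auto_derive. lra. }
  rewrite (is_RInt_unique _ _ _ _ H).
  pose proof sqrt3_pos.
  assert (HP : 0 < 1 + s + s ^ 2) by nra.
  assert (HS : 0 < (1 - s) ^ 2) by (apply pow_lt; lra).
  unfold Phi.
  replace (LtS s 1) with (1 + s + s ^ 2) by (unfold LtS; ring).
  replace (LtS s 0) with ((1 - s) ^ 2) by (unfold LtS; ring).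
  replace (QtS s 1) with ((1 - s) ^ 2 * (1 + s + s ^ 2)) by (unfold QtS; ring).
  replace (QtS s 0) with ((1 + s + s ^ 2) * (1 + s + s ^ 2)) by (unfold QtS; ring).
  replace ((6 * s * 1 - 1 - 4 * s - s ^ 2) / (sqrt 3 * (1 - s ^ 2)))
    with (- ((1 - s) / (sqrt 3 * (1 + s)))) by (field; split; nra).
  replace ((6 * s * 0 - 1 - 4 * s - s ^ 2) / (sqrt 3 * (1 - s ^ 2)))
    with (- ((1 + 4 * s + s ^ 2) / (sqrt 3 * (1 - s ^ 2)))) by (field; split; nra).
  rewrite !atan_opp.
  rewrite !ln_mult by lra.
  assert (E : - atan ((1 - s) / (sqrt 3 * (1 + s))) - - atan ((1 + 4 * s + s ^ 2) / (sqrt 3 * (1 - s ^ 2)))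
              = 3 * theta_s s) by (rewrite <- AT_id by auto; ring).
  unfold Jh, lam_s. rewrite ln_div by lra.
  toR. transitivity ((c1 s - c2 s) * (ln (1 + s + s ^ 2) - ln ((1 - s) ^ 2)) +
    c3 s * (- atan ((1 - s) / (sqrt 3 * (1 + s))) - - atan ((1 + 4 * s + s ^ 2) / (sqrt 3 * (1 - s ^ 2))))).
  { ring. }
  rewrite E. unfold c1, c2, c3. field. repeat split; try lra; nra.
Qed.

Definition Gc (s : R) : R := 6 * theta_s s ^ 2 - 1 / 2 * lam_s s ^ 2.

Lemma xs_bound s : -1 < s < 1/2 -> Rabs (xs s) < 27 / 4.
Proof.
  intros Hs. unfold xs.
  set (y := s ^ 3).
  assert (Hy : -1 < y < 1/8).
  { unfold y. split.
    - destruct (Rle_dec 0 s). pose proof (pow_le s 3 r). lra.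
      assert (0 < -s < 1) by lra.
      assert ((-s)^3 < 1) by (apply pow_lt_1_compat; [lra|lia]).
      replace (s^3) with (- (-s)^3) by ring. lra.
    - destruct (Rle_dec s 0). assert (0 <= (-s)^3) by (apply pow_le; lra).
      replace (s^3) with (- (-s)^3) by ring. lra.
      assert (0 < s) by lra. assert (s * s < 1/4) by nra. simpl. nra. }
  assert (0 < (1 - y) ^ 2) by (apply pow_lt; lra).
  rewrite Rabs_div by lra. rewrite (Rabs_right ((1-y)^2)) by lra.
  apply (Rmult_lt_reg_r ((1 - y) ^ 2)); [lra|].
  unfold Rdiv. rewrite Rmult_assoc, Rinv_l, Rmult_1_r by lra.
  rewrite Rabs_mult, (Rabs_left (-27)) by lra.
  destruct (Rle_dec 0 y).
  - rewrite Rabs_right by lra. nra.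
  - rewrite Rabs_left by lra. nra.
Qed.

Definition dxs (s : R) : R := -81 * s ^ 2 * (1 + s ^ 3) / (1 - s ^ 3) ^ 3.

Lemma xs_deriv s : -1 < s < 1 -> is_derive xs s (dxs s).
Proof. intros Hs. assert (1 - s ^ 3 <> 0) by (assert (s^3 < 1) by nra; lra).
  unfold xs, dxs. auto_derive. { nra. } field. nra. Qed.

Lemma PSd_eq x : Rabs x < 27 / 4 -> PSeries (PS_derive ca) x = RInt (gfun x) 0 1.
Proof. intros Hx. apply is_series_unique. apply Jser. exact Hx. Qed.

Definition dGc (s : R) : R :=
  6 * sqrt 3 * theta_s s / (1 + s + s ^ 2) - 3 * (1 + s) * lam_s s / ((1 - s) * (1 + s + s ^ 2)).

Lemma Gc_deriv s : -1 < s < 1 -> is_derive Gc s (dGc s).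
Proof. intros Hs. pose proof sqrt3_pos.
  assert (0 < 1 + s + s ^ 2) by nra. assert (0 < (1 - s) ^ 2) by (apply pow_lt; lra).
  unfold Gc, theta_s, lam_s. auto_derive.
  { repeat split; try lra. apply Rdiv_lt_0_compat; lra. }
  repeat match goal with |- context [atan ?u] =>
    replace (atan u) with (theta_s s) by (unfold theta_s; f_equal; field; lra) end.
  repeat match goal with |- context [ln ?u] =>
    replace (ln u) with (lam_s s) by (unfold lam_s; f_equal; field; lra) end.
  unfold dGc.
  rewrite atan_sq2 by lra. field. repeat split; try lra; nra.
Qed.

Lemma H_deriv s : -1 < s < 1/2 ->
  is_derive (fun s => PSeries ca (xs s)) s (dxs s * PSeries (PS_derive ca) (xs s)).
Proof. intros Hs.
  apply (is_derive_comp (PSeries ca) xs s).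
  - apply is_derive_PSeries. apply ca_radius. apply xs_bound. exact Hs.
  - apply xs_deriv. lra.
Qed.

Lemma dG_eq s : -1 < s < 1/2 -> dxs s * PSeries (PS_derive ca) (xs s) = dGc s.
Proof. intros Hs.
  destruct (Req_dec s 0) as [->|Hs0].
  - unfold dxs, dGc, theta_s, lam_s.
    replace (sqrt 3 * 0 / (2 + 0)) with 0 by field. rewrite atan_0.
    replace ((1 + 0 + 0 ^ 2) / (1 - 0) ^ 2) with 1 by field. rewrite ln_1. field.
  - rewrite PSd_eq by (apply xs_bound; exact Hs).
    rewrite J_closed by (auto; lra).
    unfold dxs, Jh, dGc.
    assert (0 < 1 + s + s ^ 2) by nra. pose proof sqrt3_pos.
    field. repeat split; try lra; nra.
Qed.

Lemma ca0 : ca 0 = 0.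
Proof. unfold ca. replace (INR 0 ^ 2 * binom (3*0) 0) with 0 by (simpl; ring). apply Rinv_0. Qed.

Lemma core s : -1 < s < 1/2 -> PSeries ca (xs s) = Gc s.
Proof.
  intros Hs.
  apply (eq_by_deriv (fun s => PSeries ca (xs s)) Gc (fun s => dxs s * PSeries (PS_derive ca) (xs s)) (-1) (1/2) 0 s); auto.
  - lra.
  - intros y Hy. apply H_deriv. exact Hy.
  - intros y Hy. rewrite dG_eq by exact Hy. apply Gc_deriv. lra.
  - replace (xs 0) with 0 by (unfold xs; field). rewrite PSeries_0.
    rewrite ca0. unfold Gc, theta_s, lam_s.
    replace (sqrt 3 * 0 / (2 + 0)) with 0 by field. rewrite atan_0.
    replace ((1 + 0 + 0 ^ 2) / (1 - 0) ^ 2) with 1 by field. rewrite ln_1. field.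
Qed.

Lemma core_series s : -1 < s < 1/2 ->
  is_series (fun n => ca (S n) * xs s ^ (S n)) (Gc s).
Proof.
  intros Hs.
  pose proof (CV_radius_inside ca (xs s) (ca_radius _ (xs_bound s Hs))) as Hex.
  apply ex_pseries_R in Hex.
  pose proof (Series_correct _ Hex) as H.
  rewrite <- core by exact Hs. unfold PSeries.
  apply (is_series_incr_1 (fun n => ca n * xs s ^ n)).
  match goal with |- is_series _ ?l => replace l with (Series (fun k : nat => ca k * xs s ^ k)); [exact H|] end.
  rewrite ca0. change (plus ?a ?b) with (a + b). toR. ring.
Qed.

Definition beta : R := 1 - alpha.

Lemma sqrt5_sq : sqrt 5 * sqrt 5 = 5.
Proof. apply sqrt_sqrt. lra. Qed.
Lemma sqrt5_gt2 : 2 < sqrt 5.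
Proof. replace 2 with (sqrt 4). apply sqrt_lt_1; lra.
  replace 4 with (2 * 2) by ring. rewrite sqrt_square; lra. Qed.

Lemma alpha_sq : alpha * alpha = alpha + 1.
Proof. unfold alpha. pose proof sqrt5_sq. nra. Qed.
Lemma beta_sq : beta * beta = beta + 1.
Proof. unfold beta. pose proof alpha_sq. nra. Qed.
Lemma alpha_beta : alpha * beta = -1.
Proof. unfold beta. pose proof alpha_sq. nra. Qed.
Lemma alpha_gt : 3/2 < alpha.
Proof. unfold alpha. pose proof sqrt5_gt2. lra. Qed.
Lemma alpha_minus_beta : alpha - beta = sqrt 5.
Proof. unfold beta, alpha. field. Qed.

Lemma fib_binet (n : nat) :
  fst (fib_pair n) = (alpha ^ n - beta ^ n) / sqrt 5 /\
  snd (fib_pair n) = (alpha ^ S n - beta ^ S n) / sqrt 5.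
Proof.
  pose proof sqrt5_gt2. pose proof alpha_minus_beta.
  induction n as [|n [IH1 IH2]].
  - simpl. split.
    + field. lra.
    + replace (alpha * 1 - beta * 1) with (alpha - beta) by ring. rewrite H0. field. lra.
  - simpl fib_pair. destruct (fib_pair n) as [u v]. simpl in *. split.
    + rewrite IH2. reflexivity.
    + rewrite IH1, IH2.
      replace (alpha * (alpha * alpha ^ n)) with ((alpha * alpha) * alpha ^ n) by ring.
      replace (beta * (beta * beta ^ n)) with ((beta * beta) * beta ^ n) by ring.
      rewrite alpha_sq, beta_sq. field. lra.
Qed.

Lemma luc_binet (n : nat) :
  fst (luc_pair n) = alpha ^ n + beta ^ n /\
  snd (luc_pair n) = alpha ^ S n + beta ^ S n.
Proof.
  induction n as [|n [IH1 IH2]].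
  - simpl. unfold beta. split; ring.
  - simpl luc_pair. destruct (luc_pair n) as [u v]. simpl in *. split.
    + rewrite IH2. reflexivity.
    + rewrite IH1, IH2.
      replace (alpha * (alpha * alpha ^ n)) with ((alpha * alpha) * alpha ^ n) by ring.
      replace (beta * (beta * beta ^ n)) with ((beta * beta) * beta ^ n) by ring.
      rewrite alpha_sq, beta_sq. ring.
Qed.

Lemma fibn_binet n : fibn n = (alpha ^ n - beta ^ n) / sqrt 5.
Proof. apply fib_binet. Qed.
Lemma lucn_binet n : lucn n = alpha ^ n + beta ^ n.
Proof. apply luc_binet. Qed.

Lemma alpha_pos : 0 < alpha.
Proof. pose proof alpha_gt. lra. Qed.
Lemma beta_neq0 : beta <> 0.
Proof. intro H. pose proof alpha_beta. rewrite H in H0. lra. Qed.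

Lemma inv_alpha_pow n : / alpha ^ n = (- beta) ^ n.
Proof. rewrite <- pow_inv. f_equal. pose proof alpha_beta. pose proof alpha_pos.
  apply (Rmult_eq_reg_l alpha); [|lra]. rewrite Rinv_r by lra. nra. Qed.
Lemma inv_beta_pow n : / beta ^ n = (- alpha) ^ n.
Proof. rewrite <- pow_inv. f_equal. pose proof alpha_beta. pose proof beta_neq0.
  apply (Rmult_eq_reg_l beta); [|lra]. rewrite Rinv_r by lra. nra. Qed.

Lemma powerRZ_neg_nat x n : x <> 0 -> powerRZ x (- Z.of_nat n) = / x ^ n.
Proof. intros Hx. rewrite powerRZ_neg' by auto. rewrite <- pow_powerRZ. reflexivity. Qed.

Lemma Fib_binet z : Fib z = (powerRZ alpha z - powerRZ beta z) / sqrt 5.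
Proof.
  unfold Fib. destruct (Z.leb_spec 0 z) as [Hz|Hz].
  - assert (Ez : z = Z.of_nat (Z.to_nat z)) by (rewrite Z2Nat.id; lia).
    rewrite Ez at 2 3. rewrite <- !pow_powerRZ. apply fibn_binet.
  - set (n := Z.to_nat (- z)).
    assert (Ez : z = (- Z.of_nat n)%Z) by (unfold n; rewrite Z2Nat.id; lia).
    assert (Hn : (1 <= n)%nat) by (unfold n; lia).
    rewrite Ez. rewrite !powerRZ_neg_nat by (apply Rgt_not_eq, alpha_pos || apply beta_neq0).
    rewrite inv_alpha_pow, inv_beta_pow, fibn_binet.
    destruct n as [|n]; [lia|]. simpl (S n - 1)%nat. rewrite Nat.sub_0_r.
    replace (- beta) with (-1 * beta) by ring. replace (- alpha) with (-1 * alpha) by ring.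
    rewrite !Rpow_mult_distr. simpl ((-1) ^ S n). field. pose proof sqrt5_gt2. lra.
Qed.

Lemma Luc_binet z : Luc z = powerRZ alpha z + powerRZ beta z.
Proof.
  unfold Luc. destruct (Z.leb_spec 0 z) as [Hz|Hz].
  - assert (Ez : z = Z.of_nat (Z.to_nat z)) by (rewrite Z2Nat.id; lia).
    rewrite Ez at 2 3. rewrite <- !pow_powerRZ. apply lucn_binet.
  - set (n := Z.to_nat (- z)).
    assert (Ez : z = (- Z.of_nat n)%Z) by (unfold n; rewrite Z2Nat.id; lia).
    rewrite Ez. rewrite !powerRZ_neg_nat by (apply Rgt_not_eq, alpha_pos || apply beta_neq0).
    rewrite inv_alpha_pow, inv_beta_pow, lucn_binet.
    replace (- beta) with (-1 * beta) by ring. replace (- alpha) with (-1 * alpha) by ring.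
    rewrite !Rpow_mult_distr. ring.
Qed.

Lemma powerRZ_mul_nat x m k : x <> 0 -> powerRZ x (m * Z.of_nat k) = (powerRZ x m) ^ k.
Proof. intros Hx. induction k as [|k IH].
  - simpl. rewrite Z.mul_0_r. reflexivity.
  - rewrite Nat2Z.inj_succ, Z.mul_succ_r, powerRZ_add by auto. rewrite IH. simpl. ring.
Qed.

Lemma fibn_rec n : fibn (S (S n)) = fibn (S n) + fibn n.
Proof. rewrite !fibn_binet. pose proof sqrt5_gt2.
  simpl. replace (alpha * (alpha * alpha ^ n)) with ((alpha * alpha) * alpha ^ n) by ring.
  replace (beta * (beta * beta ^ n)) with ((beta * beta) * beta ^ n) by ring.
  rewrite alpha_sq, beta_sq. field. lra. Qed.

Lemma fibn_1 : fibn 1 = 1.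
Proof. reflexivity. Qed.
Lemma fibn_2 : fibn 2 = 1.
Proof. unfold fibn. simpl. ring. Qed.

Lemma fibn_props n :
  (1 <= fibn (S n) <= alpha ^ n) /\ (1 <= fibn (S (S n)) <= alpha ^ (S n)).
Proof.
  pose proof alpha_gt.
  induction n as [|n [[IH1 IH1'] [IH2 IH2']]].
  - rewrite fibn_1, fibn_2. simpl. lra.
  - split; [split; assumption|].
    rewrite fibn_rec. split; [lra|].
    replace (alpha ^ S (S n)) with (alpha ^ n * (alpha * alpha)) by (simpl; ring).
    rewrite alpha_sq. replace (alpha ^ S n) with (alpha ^ n * alpha) in IH2' by (simpl; ring).
    nra.
Qed.

Lemma fibn_ge1 n : (1 <= n)%nat -> 1 <= fibn n.
Proof. intros H. destruct n; [lia|]. apply fibn_props. Qed.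
Lemma fibn_le n : (1 <= n)%nat -> fibn n <= alpha ^ (n - 1).
Proof. intros H. destruct n; [lia|]. simpl (S n - 1)%nat. rewrite Nat.sub_0_r. apply fibn_props. Qed.
Lemma fibn_ge2 n : (3 <= n)%nat -> 2 <= fibn n.
Proof. intros H. do 3 (destruct n; [lia|]). rewrite fibn_rec.
  pose proof (fibn_ge1 (S (S n)) ltac:(lia)). pose proof (fibn_ge1 (S n) ltac:(lia)). lra. Qed.

Lemma alpha_pow_ge n : 1 <= alpha ^ n.
Proof. pose proof alpha_gt. apply pow_R1_Rle. lra. Qed.

Lemma fib_ratio_bound (a b : nat) : (1 <= a)%nat -> (2 <= b)%nat ->
  0 < fibn a / (alpha ^ (a + b) * fibn b) < 1 /\
  ((3 <= b)%nat -> fibn a / (alpha ^ (a + b) * fibn b) < 1 / 8).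
Proof.
  intros Ha Hb. pose proof alpha_gt.
  pose proof (fibn_ge1 a Ha) as Fa1. pose proof (fibn_le a Ha) as Fa2.
  pose proof (fibn_ge1 b ltac:(lia)) as Fb1.
  assert (Eab : alpha ^ (a + b) = alpha ^ (a - 1) * (alpha ^ (S b))).
  { rewrite <- pow_add. f_equal. lia. }
  pose proof (alpha_pow_ge (a - 1)) as P1.
  assert (P3 : alpha ^ 3 <= alpha ^ S b) by (apply Rle_pow; lia || lra).
  assert (A3 : 3 < alpha ^ 3) by (simpl; nra).
  assert (D : 0 < alpha ^ (a + b) * fibn b).
  { rewrite Eab. apply Rmult_lt_0_compat; [|lra]. apply Rmult_lt_0_compat; lra. }
  split; [split|].
  - apply Rdiv_lt_0_compat; lra.
  - apply (Rmult_lt_reg_r (alpha ^ (a + b) * fibn b)); [lra|].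
    unfold Rdiv. rewrite Rmult_assoc, Rinv_l, Rmult_1_r, Rmult_1_l by lra.
    rewrite Eab. assert (X : 1 < alpha ^ S b * fibn b) by nra.
    assert (alpha ^ (a - 1) < alpha ^ (a - 1) * (alpha ^ S b * fibn b)) by nra. nra.
  - intros Hb3. pose proof (fibn_ge2 b Hb3) as Fb2.
    assert (P4 : alpha ^ 4 <= alpha ^ S b) by (apply Rle_pow; lia || lra).
    assert (A4 : 5 < alpha ^ 4) by (simpl; nra).
    apply (Rmult_lt_reg_r (alpha ^ (a + b) * fibn b)); [lra|].
    unfold Rdiv. rewrite Rmult_assoc, Rinv_l, Rmult_1_r by lra.
    rewrite Eab. assert (X : 8 < alpha ^ S b * fibn b) by nra.
    assert (alpha ^ (a - 1) * 8 < alpha ^ (a - 1) * (alpha ^ S b * fibn b)) by nra. nra.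
Qed.

Lemma rpow13_cube t : 0 < t -> Rpower t (1/3) ^ 3 = t.
Proof. intros Ht. rewrite <- Rpower_pow by (apply exp_pos).
  rewrite Rpower_mult. replace (1/3 * INR 3) with 1 by (simpl; field). apply Rpower_1. exact Ht. Qed.

Lemma cbrt_cube y : cbrt y ^ 3 = y.
Proof. unfold cbrt. destruct (Rlt_dec 0 y) as [H|H].
  - apply rpow13_cube. exact H.
  - destruct (Rlt_dec y 0) as [H2|H2].
    + replace ((- Rpower (- y) (1 / 3)) ^ 3) with (- (Rpower (- y) (1 / 3) ^ 3)) by ring.
      rewrite rpow13_cube by lra. ring.
    + simpl. lra.
Qed.

Lemma cube_inj x y : x ^ 3 = y ^ 3 -> x = y.
Proof. intros H.
  assert (E : (x - y) * (x * x + x * y + y * y) = 0).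
  { replace ((x - y) * (x * x + x * y + y * y)) with (x ^ 3 - y ^ 3) by ring. lra. }
  apply Rmult_integral in E. destruct E as [E|E]; [lra|].
  assert (E1 : y * y = 0) by (assert (0 <= (2 * x + y) * (2 * x + y)) by nra; nra).
  apply Rmult_integral in E1. assert (y = 0) by (destruct E1; lra). subst y.
  assert (E2 : x * x = 0) by lra. apply Rmult_integral in E2. destruct E2; lra. Qed.

Lemma cbrt_neq0 y : y <> 0 -> cbrt y <> 0.
Proof. intros Hy E. pose proof (cbrt_cube y). rewrite E in H. simpl in H. lra. Qed.

Lemma cube_bound y : -1 < y ^ 3 < 1/8 -> -1 < y < 1/2.
Proof. intros [H1 H2]. split.
  - destruct (Rlt_dec (-1) y); auto. exfalso.
    assert (y <= -1) by lra. assert (y ^ 3 <= -1) by (simpl; nra). lra.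
  - destruct (Rlt_dec y (1/2)); auto. exfalso.
    assert (1/2 <= y) by lra. assert (1/8 <= y ^ 3) by (simpl; nra). lra.
Qed.

Lemma G1 (Fp Fd Fq Aq Ap Apq Sp : R) :
  0 < Aq -> 0 < Ap -> Fp <> 0 -> Fd <> 0 -> Ap * Aq = Apq ->
  Ap * Fd - Apq * Fp = Sp * Fq ->
  -1 < Fd / (Aq * Fp) < 1/8 ->
  let s1 := cbrt Fd / cbrt (Aq * Fp) in
  s1 ^ 3 = Fd / (Aq * Fp) /\ -1 < s1 < 1/2 /\
  atan (sqrt 3 * cbrt Fd / (2 * cbrt (Aq * Fp) + cbrt Fd)) = theta_s s1 /\
  ln (Sp * Fq / (cbrt (Ap * Fd) - cbrt (Apq * Fp)) ^ 3) = lam_s s1.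
Proof.
  intros HAq HAp HFp HFd HA R1 HR s1.
  assert (Ha : cbrt (Aq * Fp) <> 0) by (apply cbrt_neq0; apply Rmult_integral_contrapositive; split; lra).
  assert (Hs3 : s1 ^ 3 = Fd / (Aq * Fp)).
  { unfold s1. unfold Rdiv. rewrite Rpow_mult_distr, pow_inv, !cbrt_cube. reflexivity. }
  assert (Hs : -1 < s1 < 1/2) by (apply cube_bound; rewrite Hs3; exact HR).
  split; [exact Hs3|]. split; [exact Hs|]. split.
  - unfold theta_s, s1. f_equal. field. split; auto.
    intro E. assert (cbrt Fd = -2 * cbrt (Aq * Fp)) by lra.
    assert (s1 = -2) by (unfold s1; rewrite H; field; auto). lra.
  - set (v := cbrt (Apq * Fp)).
    assert (Hv3 : v ^ 3 = Apq * Fp) by apply cbrt_cube.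
    assert (HApq : Apq <> 0) by (rewrite <- HA; apply Rgt_not_eq; apply Rmult_lt_0_compat; lra).
    assert (Hv : v <> 0) by (apply cbrt_neq0; apply Rmult_integral_contrapositive; split; auto).
    assert (Hu : cbrt (Ap * Fd) = s1 * v).
    { apply cube_inj. rewrite cbrt_cube, Rpow_mult_distr, Hs3, Hv3. rewrite <- HA. field. split; lra. }
    rewrite Hu. rewrite <- R1.
    replace (Ap * Fd - Apq * Fp) with (v ^ 3 * (s1 ^ 3 - 1)).
    2:{ rewrite Hv3, Hs3, <- HA. field. split; lra. }
    unfold lam_s. f_equal. field. split; [lra|]. intro E. assert (E2 : (s1 - 1) * v = 0) by lra. apply Rmult_integral in E2. destruct E2; lra.
Qed.

Lemma G2 (Fp Fd Fq Aq Apq Sq : R) :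
  0 < Aq -> Fp <> 0 -> Fd <> 0 -> (Sq = 1 \/ Sq = -1) ->
  Aq * Fd - Sq * Fp = Apq * Fq ->
  -1 < Sq * Fp / (Aq * Fd) < 1/8 ->
  let s2 := Sq * cbrt Fp / cbrt (Aq * Fd) in
  s2 ^ 3 = Sq * Fp / (Aq * Fd) /\ -1 < s2 < 1/2 /\
  atan (sqrt 3 * cbrt Fp / (2 * cbrt (Aq * Fd) + Sq * cbrt Fp)) ^ 2 = theta_s s2 ^ 2 /\
  ln (Apq * Fq / (cbrt (Aq * Fd) - Sq * cbrt Fp) ^ 3) = lam_s s2.
Proof.
  intros HAq HFp HFd HS R2 HR s2.
  set (d := cbrt (Aq * Fd)).
  assert (Hd3 : d ^ 3 = Aq * Fd) by apply cbrt_cube.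
  assert (He3 : cbrt Fp ^ 3 = Fp) by apply cbrt_cube.
  assert (Hd : d <> 0) by (apply cbrt_neq0; apply Rmult_integral_contrapositive; split; lra).
  assert (Hs3 : s2 ^ 3 = Sq * Fp / (Aq * Fd)).
  { unfold s2. fold d. unfold Rdiv. rewrite !Rpow_mult_distr, pow_inv, He3, Hd3.
    destruct HS as [-> | ->]; simpl; ring. }
  assert (Hs : -1 < s2 < 1/2) by (apply cube_bound; rewrite Hs3; exact HR).
  assert (He : cbrt Fp = Sq * s2 * d).
  { unfold s2. fold d. destruct HS as [-> | ->]; field; auto. }
  split; [exact Hs3|]. split; [exact Hs|]. split.
  - fold d. rewrite He. unfold theta_s.
    assert (H2s : 2 + s2 <> 0) by lra.
    destruct HS as [-> | ->].
    + replace (2 * d + 1 * (1 * s2 * d)) with (d * (2 + s2)) by ring.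
      f_equal. f_equal. field. auto.
    + replace (2 * d + -1 * (-1 * s2 * d)) with (d * (2 + s2)) by ring.
      replace (sqrt 3 * (-1 * s2 * d) / (d * (2 + s2))) with (- (sqrt 3 * s2 / (2 + s2)))
        by (field; auto).
      rewrite atan_opp. ring.
  - fold d.
    assert (E1 : Apq * Fq = d ^ 3 * (1 - s2 ^ 3)).
    { rewrite <- R2, Hs3, <- Hd3. field. auto. }
    assert (E2 : d - Sq * cbrt Fp = d * (1 - s2)).
    { rewrite He. destruct HS as [-> | ->]; ring. }
    rewrite E1, E2. unfold lam_s. f_equal. field. split; [lra | auto].
Qed.

Lemma pm1_pow n : (-1) ^ n = 1 \/ (-1) ^ n = -1.
Proof. induction n as [|n [IH|IH]]; simpl; [left; ring| right; rewrite IH; ring | left; rewrite IH; ring]. Qed.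

Lemma sign_pm1 z : powerRZ (-1) z = 1 \/ powerRZ (-1) z = -1.
Proof. destruct z as [|p|p]; simpl.
  - left; reflexivity.
  - apply pm1_pow.
  - destruct (pm1_pow (Pos.to_nat p)) as [H|H]; rewrite H; [left|right]; field.
Qed.

Lemma beta_eq : beta = -1 * / alpha.
Proof. pose proof alpha_beta. pose proof alpha_pos.
  apply (Rmult_eq_reg_l alpha); [|lra]. field_simplify; lra. Qed.

Lemma powerRZ_beta z : powerRZ beta z = powerRZ (-1) z / powerRZ alpha z.
Proof. rewrite beta_eq, powerRZ_mult, powerRZ_inv'. reflexivity. Qed.

Lemma Fib_binet2 z : Fib z = (powerRZ alpha z - powerRZ (-1) z / powerRZ alpha z) / sqrt 5.
Proof. rewrite Fib_binet, powerRZ_beta. reflexivity. Qed.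

Lemma is_series_minusR (a b : nat -> R) la lb :
  is_series a la -> is_series b lb -> is_series (fun n => a n - b n) (la - lb).
Proof. apply (is_series_minus (V:=R_NormedModule)). Qed.
Lemma is_series_plusR (a b : nat -> R) la lb :
  is_series a la -> is_series b lb -> is_series (fun n => a n + b n) (la + lb).
Proof. apply (is_series_plus (V:=R_NormedModule)). Qed.
Lemma is_series_scalR (c : R) (a : nat -> R) l :
  is_series a l -> is_series (fun n => c * a n) (c * l).
Proof. apply (is_series_scal (K:=R_AbsRing) (V:=R_NormedModule)). Qed.
Lemma is_series_extR (a b : nat -> R) l :
  (forall n, a n = b n) -> is_series a l -> is_series b l.
Proof. apply (is_series_ext (V:=R_NormedModule)). Qed.
Lemma is_series_ext_valR (a b : nat -> R) l l' :
  (forall n, a n = b n) -> l = l' -> is_series a l -> is_series b l'.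
Proof. intros H1 H2 H3. rewrite <- H2. exact (is_series_extR a b l H1 H3). Qed.

Lemma pow_m1_pred n : (1 <= n)%nat -> (-1) ^ (n - 1) = - (-1) ^ n.
Proof. intros H. destruct n; [lia|]. simpl. rewrite Nat.sub_0_r. ring. Qed.

Lemma pow_m1_parity n : ((-1) ^ n = 1 /\ (n = 0 \/ 2 <= n)%nat) \/ ((-1) ^ n = -1 /\ (n = 1 \/ 3 <= n)%nat).
Proof.
  destruct (Nat.Even_or_Odd n) as [[k Hk]|[k Hk]]; subst n.
  - left. split; [|lia]. rewrite pow_mult. simpl. replace (-1 * (-1 * 1)) with 1 by ring. apply pow1.
  - right. split; [|lia]. rewrite pow_add, pow_mult. simpl. replace (-1 * (-1 * 1)) with 1 by ring. rewrite pow1. ring.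
Qed.

Lemma bounds_nat (j d : nat) : (2 <= j)%nat -> (2 <= d)%nat ->
  -1 < fibn d / (alpha ^ (j + d) * ((-1) ^ (j - 1) * fibn j)) < 1/8 /\
  -1 < (-1) ^ (j + d) * ((-1) ^ (j - 1) * fibn j) / (alpha ^ (j + d) * fibn d) < 1/8.
Proof.
  intros Hj Hd.
  rewrite pow_m1_pred by lia. rewrite (pow_add (-1) j d).
  destruct (fib_ratio_bound d j ltac:(lia) Hj) as [[X1 X2] X3].
  destruct (fib_ratio_bound j d ltac:(lia) Hd) as [[Y1 Y2] Y3].
  rewrite Nat.add_comm in X1, X2, X3.
  pose proof (fibn_ge1 j ltac:(lia)). pose proof (fibn_ge1 d ltac:(lia)).
  pose proof (alpha_pow_ge (j + d)).
  set (F := fibn j) in *. set (D := fibn d) in *. set (A := alpha ^ (j + d)) in *.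
  pose proof (pow_m1_parity j) as Pj. pose proof (pow_m1_parity d) as Pd.
  set (e := (-1) ^ j) in *. set (e2 := (-1) ^ d) in *.
  assert (HA : 0 < A) by lra.
  split.
  - destruct Pj as [[E _]|[E Hj3]].
    + assert (Eq : D / (A * (- e * F)) = - (D / (A * F))) by (rewrite E; field; lra).
      rewrite Eq. lra.
    + assert (Eq : D / (A * (- e * F)) = D / (A * F)) by (rewrite E; field; lra).
      rewrite Eq. specialize (X3 ltac:(lia)). lra.
  - destruct Pj as [[E _]|[E _]]; destruct Pd as [[E2 _]|[E2 Hd3]].
    + assert (Eq : e * e2 * (- e * F) / (A * D) = - (F / (A * D))) by (rewrite E, E2; field; lra).
      rewrite Eq. lra.
    + assert (Eq : e * e2 * (- e * F) / (A * D) = F / (A * D)) by (rewrite E, E2; field; lra).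
      rewrite Eq. specialize (Y3 ltac:(lia)). lra.
    + assert (Eq : e * e2 * (- e * F) / (A * D) = - (F / (A * D))) by (rewrite E, E2; field; lra).
      rewrite Eq. lra.
    + assert (Eq : e * e2 * (- e * F) / (A * D) = F / (A * D)) by (rewrite E, E2; field; lra).
      rewrite Eq. specialize (Y3 ltac:(lia)). lra.
Qed.

Lemma sqrt5_10 : sqrt 5 / 10 = / (2 * sqrt 5).
Proof. pose proof sqrt5_sq. pose proof sqrt5_gt2.
  apply (Rmult_eq_reg_l (2 * sqrt 5)); [|lra]. rewrite Rinv_r by lra.
  unfold Rdiv. replace (2 * sqrt 5 * (sqrt 5 * / 10)) with ((sqrt 5 * sqrt 5) / 5) by field.
  rewrite H. field. Qed.

Theorem theorem8 (p q : Z) (hp : (p <= -2)%Z) (hq : (4 <= q)%Z)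
    (hpq : (Z.abs p + 1 < q)%Z) :
  is_series (fun n : nat => term Fib p q (S n))
    (6 / sqrt 5 * ((theta1 p q) ^ 2 - (theta2 p q) ^ 2)
     - sqrt 5 / 10 * ((lambda1 p q) ^ 2 - (lambda2 p q) ^ 2))
  /\
  is_series (fun n : nat => term Luc p q (S n))
    (6 * ((theta1 p q) ^ 2 + (theta2 p q) ^ 2)
     - 1 / 2 * ((lambda1 p q) ^ 2 + (lambda2 p q) ^ 2)).
Proof.
  set (j := Z.to_nat (- p)). set (d := Z.to_nat (p + q)).
  assert (Ej : p = (- Z.of_nat j)%Z) by (unfold j; rewrite Z2Nat.id; lia).
  assert (Ed : (p + q)%Z = Z.of_nat d) by (unfold d; rewrite Z2Nat.id; lia).
  assert (Eq : q = Z.of_nat (j + d)) by (rewrite Nat2Z.inj_add; lia).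
  assert (Hj : (2 <= j)%nat) by lia. assert (Hd : (2 <= d)%nat) by lia.
  pose proof alpha_pos as Hal. assert (Hal0 : alpha <> 0) by lra.
  assert (Hm10 : -1 <> 0) by lra.
  pose proof sqrt5_gt2 as H5.
  assert (Fp_eq : Fib p = (-1) ^ (j - 1) * fibn j).
  { unfold Fib. destruct (Z.leb_spec 0 p); [lia|]. reflexivity. }
  assert (Fd_eq : Fib (p + q) = fibn d).
  { unfold Fib. destruct (Z.leb_spec 0 (p + q)); [|lia]. reflexivity. }
  assert (Aq_eq : powerRZ alpha q = alpha ^ (j + d)) by (rewrite Eq, <- pow_powerRZ; reflexivity).
  assert (Sq_eq : powerRZ (-1) q = (-1) ^ (j + d)) by (rewrite Eq, <- pow_powerRZ; reflexivity).
  destruct (bounds_nat j d Hj Hd) as [B1 B2].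
  rewrite <- Fp_eq, <- Fd_eq, <- Aq_eq in B1. rewrite <- Fp_eq, <- Fd_eq, <- Aq_eq, <- Sq_eq in B2.
  assert (HFp : Fib p <> 0).
  { rewrite Fp_eq. pose proof (fibn_ge1 j ltac:(lia)).
    destruct (pm1_pow (j - 1)) as [E|E]; rewrite E; lra. }
  assert (HFd : Fib (p + q) <> 0) by (rewrite Fd_eq; pose proof (fibn_ge1 d ltac:(lia)); lra).
  set (Fp := Fib p) in *. set (Fd := Fib (p + q)) in *. set (Fq := Fib q) in *.
  set (Ap := powerRZ alpha p). set (Aq := powerRZ alpha q) in *. set (Apq := powerRZ alpha (p + q)).
  set (Sp := powerRZ (-1) p). set (Sq := powerRZ (-1) q) in *.
  assert (HAp : 0 < Ap) by (apply powerRZ_lt; lra).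
  assert (HAq : 0 < Aq) by (apply powerRZ_lt; lra).
  assert (HApq : Ap * Aq = Apq) by (unfold Ap, Aq, Apq; rewrite powerRZ_add; auto).
  assert (HSp : Sp = 1 \/ Sp = -1) by apply sign_pm1.
  assert (HSq : Sq = 1 \/ Sq = -1) by apply sign_pm1.
  assert (HSpq : powerRZ (-1) (p + q) = Sp * Sq) by (unfold Sp, Sq; rewrite powerRZ_add; auto).
  assert (BFp : Fp = (Ap - Sp / Ap) / sqrt 5) by (unfold Fp; apply Fib_binet2).
  assert (BFd : Fd = (Apq - Sp * Sq / Apq) / sqrt 5) by (unfold Fd; rewrite Fib_binet2, HSpq; reflexivity).
  assert (BFq : Fq = (Aq - Sq / Aq) / sqrt 5) by (unfold Fq; apply Fib_binet2).
  assert (R1 : Ap * Fd - Apq * Fp = Sp * Fq).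
  { rewrite BFp, BFd, BFq, <- HApq. field. repeat split; lra. }
  assert (R2 : Aq * Fd - Sq * Fp = Apq * Fq).
  { rewrite BFp, BFd, BFq, <- HApq. field. repeat split; lra. }
  destruct (G1 Fp Fd Fq Aq Ap Apq Sp HAq HAp HFp HFd HApq R1 B1) as [S1c [S1b [T1 L1]]].
  destruct (G2 Fp Fd Fq Aq Apq Sq HAq HFp HFd HSq R2 B2) as [S2c [S2b [T2 L2]]].
  set (s1 := cbrt Fd / cbrt (Aq * Fp)) in *.
  set (s2 := Sq * cbrt Fp / cbrt (Aq * Fd)) in *.
  set (m := (2 * p + q)%Z).
  assert (Am_eq : powerRZ alpha m = Ap * Ap * Aq).
  { unfold m, Ap, Aq. replace (2 * p + q)%Z with (p + p + q)%Z by lia. rewrite !powerRZ_add; auto. }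
  assert (Sm_eq : powerRZ (-1) m = Sp * Sp * Sq).
  { unfold m, Sp, Sq. replace (2 * p + q)%Z with (p + p + q)%Z by lia. rewrite !powerRZ_add; auto. }
  assert (Bm_eq : powerRZ beta m = Sq / (Ap * Ap * Aq)).
  { rewrite powerRZ_beta, Am_eq, Sm_eq. destruct HSp as [-> | ->]; field; repeat split; lra. }
  assert (HR1 : Fd / (Aq * Fp) <> 1) by lra.
  assert (HR2 : Sq * Fp / (Aq * Fd) <> 1) by lra.
  assert (X1 : xs s1 = ratio p q * powerRZ alpha m).
  { unfold xs, ratio. fold Fp Fd Fq. rewrite S1c, Am_eq.
    assert (EFq : Fq = Sp * (Ap * Fd - Apq * Fp)) by (rewrite R1; destruct HSp as [-> | ->]; ring).
    rewrite EFq, <- HApq.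
    assert (Aq * Fp - Fd <> 0).
    { intro E. apply HR1. replace Fd with (Aq * Fp) by lra. field. split; lra. }
    destruct HSp as [-> | ->]; field; repeat split; try lra;
      intro E; apply H; [|]; nra. }
  assert (X2 : xs s2 = ratio p q * powerRZ beta m).
  { unfold xs, ratio. fold Fp Fd Fq. rewrite S2c, Bm_eq.
    assert (Aq * Fd - Sq * Fp <> 0).
    { intro E. apply HR2. replace (Sq * Fp) with (Aq * Fd) by lra. field. split; lra. }
    assert (EFq : Fq = (Aq * Fd - Sq * Fp) / (Ap * Aq)).
    { rewrite R2, <- HApq. field. split; lra. }
    rewrite EFq. field. repeat split; lra. }
  assert (Hs5 : sqrt 5 <> 0) by lra.
  assert (Hbeta : beta <> 0) by apply beta_neq0.
  split.
  - apply (is_series_ext_valR (fun n => / sqrt 5 * (ca (S n) * xs s1 ^ S n - ca (S n) * xs s2 ^ S n))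
             _ (/ sqrt 5 * (Gc s1 - Gc s2))).
    + intros n. unfold term. rewrite Fib_binet. fold m.
      rewrite !powerRZ_mul_nat by auto. rewrite X1, X2, !Rpow_mult_distr.
      unfold ca. unfold Rdiv. ring.
    + unfold theta1, lambda1, theta2, lambda2. fold Fp Fd Fq Aq Ap Apq Sp Sq.
      rewrite T1, L1, T2, L2. unfold Gc. rewrite sqrt5_10. toR. field. lra.
    + apply is_series_scalR. apply is_series_minusR; apply core_series; assumption.
  - apply (is_series_ext_valR (fun n => ca (S n) * xs s1 ^ S n + ca (S n) * xs s2 ^ S n)
             _ (Gc s1 + Gc s2)).
    + intros n. unfold term. rewrite Luc_binet. fold m.
      rewrite !powerRZ_mul_nat by auto. rewrite X1, X2, !Rpow_mult_distr.
      unfold ca. unfold Rdiv. ring.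
    + unfold theta1, lambda1, theta2, lambda2. fold Fp Fd Fq Aq Ap Apq Sp Sq.
      rewrite T1, L1, T2, L2. unfold Gc. toR. field.
    + apply is_series_plusR; apply core_series; assumption.
Qed.
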